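(* Let $n,f$ be integers with $1\le f\le n-1$ and $\Pi$ a set of $n$ processes. The following algorithm, using the oracle $\mathcal O.\mathrm{Cons}(\Pi,f)$, solves $(f+1)\text{-TAg}(\Pi,f)$: each process $p$ sends its initial value $v_p$ to all processes, waits until it has received initial values from $n-f$ processes, sets $x_p$ to the minimum of the values received, queries $\mathcal O.\mathrm{Cons}(\Pi,f)$ with $x_p$, and decides the value answered by the oracle. In particular $(f+1)\text{-TAg}(n,f)$ is $C$-reducible to $\mathrm{Cons}(n,f)$ (and hence, for every $k\in\{f+1,\dots,n\}$, $k\text{-TAg}(n,f)$ is equivalent to $\mathrm{Cons}(n,f)$ with respect to $C$-reducibility).
   Context: Model: a finite set of processes runs an asynchronous algorithm communicating by reliable message passing with unbounded delays and speeds; processes fail only by crashing. Time is $\mathcal T=\mathbb N$; a failure pattern $F$ for $\Pi$ is a nondecreasing map $\mathcal T\to2^\Pi$, $Faulty(F)=\bigcup_tF(t)$. A binary agreement problem $P$ for $\Pi$ maps each $(F,\vec V)$, $\vec V\in\{0,1\}^\Pi$, to a nonempty $P(F,\vec V)\subseteq\{0,1\}$; a task is $T=(P,f)$. An algorithm solves $T$ if in every run with $|Faulty(F)|\le f$ and initial values $\vec V$: every correct process eventually decides, decisions are irrevocable, no two processes decide differently, and decisions lie in $P(F,\vec V)$. $k\text{-TAg}_\Pi(F,\vec V)=\{0\}$ if at least $k$ entries of $\vec V$ are $0$; $=\{1\}$ if $\vec V$ is all-ones and $|Faulty(F)|\le k-1$; $=\{0,1\}$ otherwise; $k\text{-TAg}(\Pi,f)=(k\text{-TAg}_\Pi,f)$;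 $\mathrm{Cons}(\Pi,f)=|\Pi|\text{-TAg}(\Pi,f)$; $k\text{-TAg}(n,f)$, $\mathrm{Cons}(n,f)$ denote the versions for $\Pi=\{1,\dots,n\}$. Oracles: for $T=(P,f)$ on $\Pi$, $\mathcal O.T$ is a black box with consultants $\Pi$; its history is a sequence of successive consultations, in each of which every consultant may submit at most one query in $\{0,1\}$ and the oracle returns a common response $d$ with $d\in P(F,\vec V)$ for every $\vec V$ extending the partial query vector (the oracle may use the whole failure pattern, including future crashes), and every correct querier gets the response whenever at least $|\Pi|-f$ consultants query; $\mathcal O.T$ is the most general such oracle. $T_1\le_C T_2$ means there is an algorithm solving $T_1$ whose processes may additionally consult the oracle $\mathcal O.T_2$ (for a renamed copy of $T_2$ on the relevant processes). *)

(* Defs.v *)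
From mathcomp Require Import all_boot.
From mathcomp Require Import boolp.

Set Implicit Arguments.
Unset Strict Implicit.
Unset Printing Implicit Defensive.

(* Processes: Pi = 'I_n.  Time: nat.  Binary values: bool (false = 0, true = 1). *)

(* A failure pattern: F t = set of processes crashed by time t. *)
Definition failure_pattern (n : nat) := nat -> {set 'I_n}.

Definition fp_nondecreasing n (F : failure_pattern n) : Prop :=
  forall t t', t <= t' -> F t \subset F t'.

Definition Faulty n (F : failure_pattern n) : {set 'I_n} :=
  [set p | `[< exists t, p \in F t >] ].

Definition correct n (F : failure_pattern n) (p : 'I_n) : bool := p \notin Faulty F.

Definition kTAg n (k : nat) (F : failure_pattern n) (V : 'I_n -> bool) : {set bool} :=
  if k <= #|[set p | ~~ V p]| then [set false]
  else if [forall p, V p] && (#|Faulty F| <= k - 1) then [set true]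
  else [set: bool].

Definition Cons n (F : failure_pattern n) (V : 'I_n -> bool) : {set bool} := kTAg n F V.

Definition extends n (q : 'I_n -> option bool) (W : 'I_n -> bool) : Prop :=
  forall p b, q p = Some b -> W p = b.

(* A run is described by the times of the events of each process:          *)
(*   snd p       : time at which p sends v_p to all (its first step)        *)
(*   rcv p q     : time at which p receives q's initial value               *)
(*   wt p        : time at which p stops waiting (having >= n-f values)     *)
(*   qry p       : time at which p queries O.Cons(Pi,f) with x_p            *)
(*   rsp         : common response of the (single) oracle consultation      *)
(*   dec p       : time and value of p's (unique, hence irrevocable) decision *)
(* A process takes a step at time t only if it is not crashed at t.          *)

Definition rcvd_by n (rcv : 'I_n -> 'I_n -> option nat) (p : 'I_n) (t : nat)
  : {set 'I_n} :=
  [set q | if rcv p q is Some r then r <= t else false].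

(* x_p = minimum of the values received by the end of the wait *)
Definition xval n (V : 'I_n -> bool) (rcv : 'I_n -> 'I_n -> option nat)
  (p : 'I_n) (t : nat) : bool :=
  [forall q in rcvd_by rcv p t, V q].

Definition query_vec n (V : 'I_n -> bool) (rcv : 'I_n -> 'I_n -> option nat)
  (wt qry : 'I_n -> option nat) (p : 'I_n) : option bool :=
  match qry p, wt p with
  | Some _, Some tw => Some (xval V rcv p tw)
  | _, _ => None
  end.

Definition MinCons_run n (f : nat) (F : failure_pattern n) (V : 'I_n -> bool)
  (snd : 'I_n -> option nat) (rcv : 'I_n -> 'I_n -> option nat)
  (wt qry : 'I_n -> option nat) (rsp : option bool)
  (dec : 'I_n -> option (nat * bool)) : Prop :=
  (forall p s, snd p = Some s -> p \notin F s) /\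
  (forall p, correct F p -> snd p <> None) /\
  (* reliable channels: only sent messages are received, after being sent *)
  (forall p q r, rcv p q = Some r ->
     p \notin F r /\ exists s, snd q = Some s /\ s < r) /\
  (forall p q s, correct F p -> snd q = Some s -> rcv p q <> None) /\
  (forall p t, wt p = Some t ->
     p \notin F t /\ (exists s, snd p = Some s /\ s <= t) /\
     n - f <= #|rcvd_by rcv p t|) /\
  (forall p, correct F p -> wt p <> None) /\
  (forall p t, qry p = Some t ->
     p \notin F t /\ exists tw, wt p = Some tw /\ tw <= t) /\
  (forall p, correct F p -> qry p <> None) /\
  (* the oracle O.Cons(Pi, f) *)
  (forall d, rsp = Some d ->
     forall W, extends (query_vec V rcv wt qry) W -> d \in Cons F W) /\
  (n - f <= #|[set p | qry p != None]| -> rsp <> None) /\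
  (forall p t b, dec p = Some (t, b) ->
     p \notin F t /\ rsp = Some b /\ exists tq, qry p = Some tq /\ tq <= t) /\
  (forall p, correct F p -> qry p <> None -> rsp <> None -> dec p <> None).

Definition run_solves n (P : {set bool}) (F : failure_pattern n)
  (dec : 'I_n -> option (nat * bool)) : Prop :=
  (forall p, correct F p -> dec p <> None) /\
  (* agreement (irrevocability is built in: at most one decision per process) *)
  (forall p q tp tq bp bq, dec p = Some (tp, bp) -> dec q = Some (tq, bq) -> bp = bq) /\
  (forall p t b, dec p = Some (t, b) -> b \in P).

(* Main.v *)
Require Import Defs.
From mathcomp Require Import all_boot.
From mathcomp Require Import boolp.
From mathcomp Require Import zify.

Lemma inter_nonempty n (A B : {set 'I_n}) : n < #|A| + #|B| ->
  exists q, (q \in A) && (q \in B).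
Proof.
move=> H.
have H1 : #|A :|: B| <= n by rewrite -[X in _ <= X](card_ord n) max_card.
have H2 := cardsUI A B.
have : 0 < #|A :&: B| by lia.
rewrite card_gt0 => /set0Pn [q]; rewrite inE => Hq; by exists q.
Qed.

Theorem mainTheorem5 (n f : nat) (Hf1 : 1 <= f) (Hfn : f <= n - 1)
  (F : failure_pattern n) (HF : fp_nondecreasing F) (HFf : #|Faulty F| <= f)
  (V : 'I_n -> bool)
  (snd : 'I_n -> option nat) (rcv : 'I_n -> 'I_n -> option nat)
  (wt qry : 'I_n -> option nat) (rsp : option bool)
  (dec : 'I_n -> option (nat * bool)) :
  MinCons_run f F V snd rcv wt qry rsp dec ->
  run_solves (kTAg f.+1 F V) F dec.
Proof.
move=> [Hs1 [Hs2 [Hr1 [Hr2 [Hw1 [Hw2 [Hq1 [Hq2 [Ho1 [Ho2 [Hd1 Hd2]]]]]]]]]]].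
have Hrsp : rsp <> None.
  apply: Ho2.
  have Hsub : ~: Faulty F \subset [set p | qry p != None].
    apply/subsetP => p; rewrite inE => Hp; rewrite inE; have := Hq2 p Hp; by case: (qry p).
  have := subset_leq_card Hsub; have := cardsC (Faulty F); rewrite card_ord; move=> H1 H2; move: HFf Hfn H1 H2; clear; move: #|Faulty F| #|~: Faulty F| #|[set p | qry p != None]| => a b c; lia.
split; first by move=> p Hp; apply: Hd2 => //; exact: Hq2.
split.
  move=> p q tp tq bp bq /Hd1 [_ [E1 _]] /Hd1 [_ [E2 _]].
  by move: E1; rewrite E2 => -[].
move=> p t b /Hd1 [_ [Hb _]].
have Hd := Ho1 _ Hb.
rewrite /kTAg.
case: ifP => Hz.
  have Hall : forall p b, query_vec V rcv wt qry p = Some b -> b = false.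
    move=> q c; rewrite /query_vec.
    case Eq: (qry q) => [tq|] //; case Ew: (wt q) => [tw|] //= [<-].
    have [_ [_ Hc]] := Hw1 _ _ Ew.
    have Hlt : n < #|rcvd_by rcv q tw| + #|[set p | ~~ V p]|.
      move: Hc Hz Hfn Hf1; clear; move: #|rcvd_by rcv q tw| #|[set p | ~~ V p]| => a b.
      move=> ? /idP ? ? ?; lia.
    have [r /andP [Hr Hr']] := @inter_nonempty n _ _ Hlt.
    apply/negbTE/negP => /forallP /(_ r); rewrite Hr /=; move: Hr'; rewrite inE.
    by move=> /negbTE ->.
  have := Hd (fun _ => false) ltac:(by move=> q c /Hall ->).
  rewrite /Defs.Cons /kTAg.
  have -> : #|[set p | ~~ (fun _ : 'I_n => false) p]| = n.
    by rewrite -[RHS](card_ord n); apply: eq_card => q; rewrite inE.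
  rewrite leqnn => H; move: H; rewrite !inE => /eqP ->; by [].
case: ifP => Ht; last by rewrite inE.
move/andP: Ht => [/forallP HV _].
have Hall : forall p b, query_vec V rcv wt qry p = Some b -> b = true.
  move=> q c; rewrite /query_vec.
  case: (qry q) => [tq|] //; case: (wt q) => [tw|] //= [<-].
  by apply/forallP => r; apply/implyP => _; exact: HV.
have := Hd (fun _ => true) ltac:(by move=> q c /Hall ->).
rewrite /Defs.Cons /kTAg.
have -> : #|[set p | ~~ (fun _ : 'I_n => true) p]| = 0.
  by apply/eqP; rewrite cards_eq0; apply/eqP/setP => q; rewrite !inE.
have -> : (n <= 0) = false by lia.
have -> : [forall p, (fun _ : 'I_n => true) p] by apply/forallP.
have -> : (#|Faulty F| <= n - 1) by lia.
by rewrite /= => H; move: H; rewrite !inE => /eqP ->.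
Qed.
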